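(* Let $s$ be a schedule, $n\ge 2$, and $t_1,\dots,t_n$ distinct transactions of $s$. Suppose there are operations $p_k,q_k\in t_k$ ($k=1,\dots,n$), all accessing the same object $x$, such that $(p_k,q_{k+1})$ is a conflicting pair for $k=1,\dots,n-1$ and $(p_n,q_1)$ is a conflicting pair (so the conflict graph contains the cycle $t_1\to t_2\to\cdots\to t_n\to t_1$ with all edges on $x$). Then there exist two distinct transactions $t_a,t_b\in\{t_1,\dots,t_n\}$ such that the conflict graph contains both an edge on $x$ from $t_a$ to $t_b$ and an edge on $x$ from $t_b$ to $t_a$. *)

(* Defs.v *)
From mathcomp Require Import all_boot.
Set Implicit Arguments. Unset Strict Implicit. Unset Printing Implicit Defensive.

Inductive kind := Read | Write.

Record op := Op { op_tr : nat; op_kind : kind; op_obj : nat }.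

(* Operations of a schedule are identified with their positions
   (indices i < size s), so repeated identical operations stay distinct. *)
Definition schedule := seq op.

Definition op0 : op := Op 0 Read 0.
Definition at_ (s : schedule) (i : nat) : op := nth op0 s i.

Definition is_write (o : op) : bool :=
  match op_kind o with Write => true | Read => false end.

Definition conflicting (s : schedule) (i j : nat) : Prop :=
  [/\ i < j, j < size s,
      op_tr (at_ s i) <> op_tr (at_ s j),
      op_obj (at_ s i) = op_obj (at_ s j)
    & is_write (at_ s i) || is_write (at_ s j)].

Definition conflict_edge (s : schedule) (x a b : nat) : Prop :=
  exists i j, [/\ conflicting s i j, op_obj (at_ s i) = x,
                  op_tr (at_ s i) = a & op_tr (at_ s j) = b].

(* Main.v *)
Require Import Defs.
From mathcomp Require Import all_boot.
From mathcomp Require Import zify.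
From Stdlib Require Import Classical.

Lemma fwd_ind (Q : nat -> Prop) lo hi : Q lo ->
  (forall m, lo <= m -> m < hi -> Q m -> Q m.+1) ->
  forall m, lo <= m -> m <= hi -> Q m.
Proof.
move=> H0 HS m; elim: m => [|m IH] h1 h2.
  by have <- : lo = 0 by lia.
case: (ltnP lo m.+1) => h.
  apply: HS; try lia. apply: IH; lia.
by have -> : m.+1 = lo by lia.
Qed.

Lemma bwd_ind (Q : nat -> Prop) lo hi : Q hi ->
  (forall m, lo <= m -> m < hi -> Q m.+1 -> Q m) ->
  forall m, lo <= m -> m <= hi -> Q m.
Proof.
move=> H0 HS m h1 h2.
have: forall d, d <= hi - lo -> Q (hi - d).
  elim=> [|d IH] hd; first by rewrite subn0.
  have -> : hi - d.+1 = (hi - d).-1 by lia.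
  apply: HS; try lia.
  have -> : (hi - d).-1.+1 = hi - d by lia.
  apply: IH; lia.
move/(_ (hi - m)). have -> : hi - (hi - m) = m by lia.
apply; lia.
Qed.

(* Transactions t_1..t_n are t 0 .. t (n-1); p k, q k are positions in s. *)
Theorem theorem2 (s : schedule) (n : nat) (x : nat)
  (t : nat -> nat) (p q : nat -> nat) :
  2 <= n ->
  (forall i j, i < n -> j < n -> t i = t j -> i = j) ->
  (forall k, k < n -> p k < size s /\ q k < size s) ->
  (forall k, k < n -> op_tr (at_ s (p k)) = t k /\ op_tr (at_ s (q k)) = t k) ->
  (forall k, k < n -> op_obj (at_ s (p k)) = x /\ op_obj (at_ s (q k)) = x) ->
  (forall k, k.+1 < n -> conflicting s (p k) (q k.+1)) ->
  conflicting s (p n.-1) (q 0) ->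
  exists a b, [/\ a < n, b < n, t a <> t b,
                  conflict_edge s x (t a) (t b) & conflict_edge s x (t b) (t a)].
Proof.
move=> n2 tinj sz tr ob cf cfw.
apply: NNPP => NG.
have tne : forall a b, a < n -> b < n -> a <> b -> t a <> t b.
  by move=> a b ha hb hab /tinj; auto.
have both : forall a b, a < n -> b < n -> a <> b ->
    conflict_edge s x (t a) (t b) -> conflict_edge s x (t b) (t a) -> False.
  move=> a b ha hb hab e1 e2; apply: NG; exists a, b; split => //.
  exact: tne.
have edge : forall i j a b, conflicting s i j -> op_obj (at_ s i) = x ->
    op_tr (at_ s i) = t a -> op_tr (at_ s j) = t b ->
    conflict_edge s x (t a) (t b).
  by move=> i j a b c o ta tb; exists i, j; split.
have lt_e : forall j, j.+1 < n -> p j < q j.+1 by move=> j /cf [].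
have lt_w : p n.-1 < q 0 by case: cfw.
have [k [w [hk hw wr]]] : exists k w, [/\ k < n, w = p k \/ w = q k & is_write (at_ s w)].
  case: cfw => _ _ _ _ /orP [h|h].
    by exists n.-1, (p n.-1); split => //; [lia | left].
  by exists 0, (q 0); split => //; [lia | right].
have wsz : w < size s by case: hw => ->; have := sz k hk; lia.
have wtr : op_tr (at_ s w) = t k by case: hw => ->; have := tr k hk; case.
have wob : op_obj (at_ s w) = x by case: hw => ->; have := ob k hk; case.
have rinfo : forall j r, j < n -> (r = p j \/ r = q j) ->
    [/\ r < size s, op_tr (at_ s r) = t j & op_obj (at_ s r) = x].
  move=> j r hj [] ->; have := sz j hj; have := tr j hj; have := ob j hj;
  by case=> ? ?; case=> ? ?; case=> ? ?; split.
have cl : forall j r, j < n -> j <> k -> (r = p j \/ r = q j) -> r < w ->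
    conflicting s r w.
  move=> j r hj hjk hr rw; have [r1 r2 r3] := rinfo j r hj hr.
  split => //; first by rewrite r2 wtr; exact: tne.
    by rewrite r3 wob.
  by rewrite wr orbT.
have cr : forall j r, j < n -> j <> k -> (r = p j \/ r = q j) -> w < r ->
    conflicting s w r.
  move=> j r hj hjk hr rw; have [r1 r2 r3] := rinfo j r hj hr.
  split => //; first by rewrite r2 wtr; apply: tne => //; auto.
    by rewrite r3 wob.
  by rewrite wr.
have neq : forall j r, j < n -> j <> k -> (r = p j \/ r = q j) -> r <> w.
  move=> j r hj hjk hr rw; have [_ r2 _] := rinfo j r hj hr.
  by apply: hjk; apply: tinj => //; rewrite -r2 -wtr rw.
have mixed : forall j r r', j < n -> j <> k -> (r = p j \/ r = q j) ->
    (r' = p j \/ r' = q j) -> r < w -> w < r' -> False.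
  move=> j r r' hj hjk hr hr' h1 h2.
  have [_ a2 a3] := rinfo j r hj hr.
  apply: (both j k) => //.
    by apply: (edge r w) => //; apply: (cl j).
  by apply: (edge w r') => //; [apply: (cr j) | have [] := rinfo j r' hj hr'].
have side : forall j, j < n -> j <> k -> (w < p j <-> w < q j).
  move=> j hj hjk; have n1 := neq j (p j) hj hjk (or_introl erefl).
  have n2' := neq j (q j) hj hjk (or_intror erefl).
  split => h.
    case: (ltnP w (q j)) => // h'.
    exfalso; apply: (mixed j (q j) (p j)); auto; lia.
  case: (ltnP w (p j)) => // h'.
  exfalso; apply: (mixed j (p j) (q j)); auto; lia.
have ecf : forall j, j.+1 < n -> conflict_edge s x (t j) (t j.+1).
  move=> j hj; apply: (edge (p j) (q j.+1)); first exact: cf.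
  - by have := ob j (ltnW hj); case.
  - by have := tr j (ltnW hj); case.
  - by have := tr j.+1 hj; case.
have ecw : conflict_edge s x (t n.-1) (t 0).
  apply: (edge (p n.-1) (q 0)) => //.
  - by have := ob n.-1 (ltac:(lia)); case.
  - by have := tr n.-1 (ltac:(lia)); case.
  - by have := tr 0 (ltac:(lia)); case.
case: hw => hw.
-
  have fin : forall j, j < n -> j <> k -> w < p j -> conflict_edge s x (t j) (t k) -> False.
    move=> j hj hjk h e; apply: (both k j) => //; first by auto.
    apply: (edge w (p j)) => //; first by apply: (cr j); auto.
    by have [] := rinfo j (p j) hj (or_introl erefl).
  have step : forall m, m <> k -> m.+1 < n -> w < q m -> w < q m.+1.
    move=> m hmk h2 h3; have := lt_e m h2; have := side m (ltnW h2) hmk; lia.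
  have hq0 : w < q 0.
    case: (eqVneq k n.-1) => [ek|nk].
      by rewrite hw ek.
    have hf : forall m, k.+1 <= m -> m <= n.-1 -> w < q m.
      apply: fwd_ind; first by rewrite hw; apply: lt_e; lia.
      move=> m h1 h2; apply: step; lia.
    have h1 := hf n.-1 ltac:(lia) ltac:(lia).
    have := side n.-1 ltac:(lia) ltac:(move/eqP: nk; lia). lia.
  case: (posnP k) => [k0|kp].
    have hf : forall m, k.+1 <= m -> m <= n.-1 -> w < q m.
      apply: fwd_ind; first by rewrite hw; apply: lt_e; lia.
      move=> m h1 h2; apply: step; lia.
    have h1 := hf n.-1 ltac:(lia) ltac:(lia).
    have := side n.-1 ltac:(lia) ltac:(lia) => hs.
    apply: (fin n.-1); try lia.
    by rewrite k0.
  have hf : forall m, 0 <= m -> m <= k.-1 -> w < q m.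
    apply: fwd_ind => // m h1 h2; apply: step; lia.
  have h1 := hf k.-1 ltac:(lia) ltac:(lia).
  have := side k.-1 ltac:(lia) ltac:(lia) => hs.
  apply: (fin k.-1); try lia.
  have := ecf k.-1 ltac:(lia). by have -> : k.-1.+1 = k by lia.
-
  have finb : forall j, j < n -> j <> k -> q j < w -> conflict_edge s x (t k) (t j) -> False.
    move=> j hj hjk h e; apply: (both k j) => //; first by auto.
    have [_ a2 a3] := rinfo j (q j) hj (or_intror erefl).
    by apply: (edge (q j) w) => //; apply: (cl j); auto.
  have stepb : forall m, m <> k -> m.+1 < n -> q m.+1 < w -> q m < w.
    move=> m hmk h2 h3; have := lt_e m h2; have := side m (ltnW h2) hmk.
    have := neq m (p m) (ltnW h2) hmk (or_introl erefl).
    have := neq m (q m) (ltnW h2) hmk (or_intror erefl). lia.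
  have pq : forall j, j < n -> j <> k -> p j < w -> q j < w.
    move=> j hj hjk h; have := side j hj hjk.
    have := neq j (q j) hj hjk (or_intror erefl). lia.
  case: (posnP k) => [k0|kp].
    have h0 : q n.-1 < w by apply: pq; [lia|lia|rewrite hw k0].
    have hf : forall m, 1 <= m -> m <= n.-1 -> q m < w.
      apply: bwd_ind => // m h1 h2; apply: stepb; lia.
    apply: (finb 1); try lia; first by apply: hf; lia.
    by rewrite k0; apply: ecf; lia.
  have h0 : q k.-1 < w.
    apply: pq; try lia; have := lt_e k.-1; rewrite hw.
    have -> : k.-1.+1 = k by lia. move=> H; apply: H; lia.
  have hf : forall m, 0 <= m -> m <= k.-1 -> q m < w.
    apply: bwd_ind => // m h1 h2; apply: stepb; lia.
  have hq0 := hf 0 ltac:(lia) ltac:(lia).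
  case: (eqVneq k n.-1) => [ek|nk].
    by apply: (finb 0); try lia; rewrite ek.
  have nk' : n.-1 <> k by move/eqP: nk; lia.
  have h1 : q n.-1 < w by apply: pq; lia.
  have hg : forall m, k.+1 <= m -> m <= n.-1 -> q m < w.
    apply: bwd_ind => // m h2 h3; apply: stepb; lia.
  apply: (finb k.+1); try lia; first by apply: hg; lia.
  by apply: ecf; lia.
Qed.
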